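(* For every integer $n$ with $1\le n\le N$, every integer $j\ge 0$ and all $x,y$ with $x-y\notin\{0,1,\dots,j\}$, $$\mathscr K_{n-1}^{(0,j)}(x,y)=\mathscr A_n^{(j)}(x,y)\,K_n(x)+\mathscr B_n^{(j)}(x,y)\,K_{n-1}(x),$$ where $$\mathscr A_n^{(j)}(x,y)=\frac{j!}{\|K_{n-1}\|^2\,[x-y]_{j+1}}\sum_{k=0}^{j}\frac{\Delta^kK_{n-1}(y)}{k!}[x-y]_k,\qquad \mathscr B_n^{(j)}(x,y)=-\frac{j!}{\|K_{n-1}\|^2\,[x-y]_{j+1}}\sum_{k=0}^{j}\frac{\Delta^kK_{n}(y)}{k!}[x-y]_k .$$
   Context: Fix an integer $N\ge 1$ and $0<p<1$. Notation: $(a)_0=1$, $(a)_k=a(a+1)\cdots(a+k-1)$ (Pochhammer symbol); $[z]_0=1$, $[z]_k=z(z-1)\cdots(z-k+1)$ (falling factorial). For a function $f$, $\Delta f(x)=f(x+1)-f(x)$, $\nabla f(x)=f(x)-f(x-1)$, $\Delta^0$ is the identity and $\Delta^k=\Delta\circ\Delta^{k-1}$; $\Delta_x,\Delta_y$ denote $\Delta$ acting in the indicated variable. For $0\le n\le N$ the monic Kravchuk polynomial is $K_n(x)=p^n(-N)_n\sum_{k=0}^{n}\frac{(-n)_k(-x)_k}{(-N)_k\,k!}p^{-k}$, and $K_{-1}=0$; these are monic of degree $n$ and orthogonal on $\{0,\dots,N\}$ with respect to the binomial weight $w(x)=\binom{N}{x}p^x(1-p)^{N-x}$, with $\|K_n\|^2=\sum_{x=0}^N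 K_n(x)^2w(x)=n!(-N)_np^n(p-1)^n$. For $1\le n\le N+1$ and integers $i,l\ge0$, the differenced reproducing kernel is $\mathscr K_{n-1}^{(i,l)}(x,y)=\sum_{k=0}^{n-1}\frac{\Delta^iK_k(x)\,\Delta^lK_k(y)}{\|K_k\|^2}$ (i.e. $\Delta_x^i\Delta_y^l$ applied to $\sum_{k=0}^{n-1}K_k(x)K_k(y)/\|K_k\|^2$). *)

(* Defs.v *)
From HB Require Import structures.
From mathcomp Require Import all_boot all_order all_algebra.
Set Implicit Arguments. Unset Strict Implicit. Unset Printing Implicit Defensive.
Import Order.TTheory GRing.Theory Num.Theory.
Local Open Scope ring_scope.

Section Kravchuk.
Variable R : realFieldType.

Definition poch (a : R) (k : nat) : R := \prod_(i < k) (a + i%:R).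
Definition falling (z : R) (k : nat) : R := \prod_(i < k) (z - i%:R).

Definition Delta (f : R -> R) : R -> R := fun x => f (x + 1) - f x.
Definition DeltaN (k : nat) (f : R -> R) : R -> R := iter k Delta f.

(* monic Kravchuk polynomial K_n(x) (parameters N, p) *)
Definition Krav (N : nat) (p : R) (n : nat) (x : R) : R :=
  p ^+ n * poch (- N%:R) n *
  \sum_(k < n.+1) (poch (- n%:R) k * poch (- x) k /
                   (poch (- N%:R) k * k`!%:R) * p ^- k).

Definition wbin (N : nat) (p : R) (x : nat) : R :=
  'C(N, x)%:R * p ^+ x * (1 - p) ^+ (N - x).

Definition Knorm2 (N : nat) (p : R) (n : nat) : R :=
  \sum_(x < N.+1) Krav N p n x%:R ^+ 2 * wbin N p x.

(* differenced reproducing kernel  K_{n-1}^{(i,l)}(x,y) *)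
Definition Kker (N : nat) (p : R) (n i l : nat) (x y : R) : R :=
  \sum_(k < n) DeltaN i (Krav N p k) x * DeltaN l (Krav N p k) y
               / Knorm2 N p k.

Definition Acoef (N : nat) (p : R) (n j : nat) (x y : R) : R :=
  j`!%:R / (Knorm2 N p n.-1 * falling (x - y) j.+1) *
  \sum_(k < j.+1) (DeltaN k (Krav N p n.-1) y / k`!%:R * falling (x - y) k).

Definition Bcoef (N : nat) (p : R) (n j : nat) (x y : R) : R :=
  - (j`!%:R / (Knorm2 N p n.-1 * falling (x - y) j.+1)) *
  \sum_(k < j.+1) (DeltaN k (Krav N p n) y / k`!%:R * falling (x - y) k).

End Kravchuk.

(* Main.v *)
Set Warnings "-all".
Require Import Defs.
From HB Require Import structures.
From mathcomp Require Import all_boot all_order all_algebra.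
From mathcomp Require Import ring lra zify.
Set Implicit Arguments. Unset Strict Implicit. Unset Printing Implicit Defensive.
Import Order.TTheory GRing.Theory Num.Theory.
Local Open Scope ring_scope.

Section Prf.
Variable R : realFieldType.

Lemma pochS (a : R) k : poch a k.+1 = poch a k * (a + k%:R).
Proof. by rewrite /poch big_ord_recr. Qed.

Lemma poch0 (a : R) : poch a 0 = 1.
Proof. by rewrite /poch big_ord0. Qed.

Lemma pochSl (a : R) k : poch a k.+1 = a * poch (a + 1) k.
Proof.
rewrite /poch big_ord_recl /= addr0; congr (_ * _); apply: eq_bigr => i _.
by rewrite /bump /= -nat1r addrA.
Qed.

Lemma poch_negn (m k : nat) : poch (- m%:R : R) k = (-1) ^+ k * (m ^_ k)%:R.
Proof.
elim: k => [|k IH]; first by rewrite poch0 ffactn0 expr0 mulr1.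
rewrite pochS IH ffactnSr exprS natrM.
case: (leqP k m) => hk.
  rewrite (natrB _ hk). ring.
have -> : (m - k)%N = 0%N by lia.
have -> : m ^_ k = 0%N by apply/eqP; rewrite -leqn0 leqNgt ffact_gt0 -ltnNge.
by rewrite !mulr0n !(mulr0, mul0r).
Qed.

Lemma poch_negN_neq0 (m k : nat) : (k <= m)%N -> poch (- m%:R : R) k != 0.
Proof.
move=> hk; rewrite poch_negn mulf_eq0 negb_or signr_eq0 /= pnatr_eq0 -lt0n.
by rewrite ffact_gt0.
Qed.

Lemma poch_negnn (m : nat) : poch (- m%:R : R) m = (-1) ^+ m * m`!%:R.
Proof. by rewrite poch_negn ffactnn. Qed.

Definition Pp (k : nat) : {poly R} := \prod_(i < k) ((i%:R)%:P - 'X).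

Lemma Pp_horner k (x : R) : (Pp k).[x] = poch (- x) k.
Proof.
rewrite /Pp horner_prod /poch; apply: eq_bigr => i _.
by rewrite hornerD hornerN hornerC hornerX addrC.
Qed.

Lemma PpS k : Pp k.+1 = Pp k * ((k%:R)%:P - 'X).
Proof. by rewrite /Pp big_ord_recr. Qed.

Lemma Pp_size_lead k : size (Pp k) = k.+1 /\ lead_coef (Pp k) = (-1) ^+ k.
Proof.
elim: k => [|k [hs hl]].
  by rewrite /Pp big_ord0 size_poly1 lead_coef1 expr0.
have fnz : ((k%:R)%:P - 'X : {poly R}) = - ('X - (k%:R)%:P) by rewrite opprB.
have hnz : Pp k != 0 by rewrite -size_poly_eq0 hs.
have fnz2 : ((k%:R)%:P - 'X : {poly R}) != 0.
  by rewrite fnz oppr_eq0 -size_poly_eq0 size_XsubC.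
rewrite PpS size_mul // lead_coefM hs fnz size_polyN size_XsubC lead_coefN lead_coefXsubC.
by rewrite addn2 hl exprS mulrC.
Qed.


Variable N : nat.
Variable p : R.
Hypothesis hp0 : 0 < p.
Hypothesis hp1 : p < 1.

Definition ecoef (n k : nat) : R :=
  p ^+ n * poch (- N%:R) n *
  (poch (- n%:R) k / (poch (- N%:R) k * k`!%:R) * p ^- k).

Definition kp (n : nat) : {poly R} := \sum_(k < n.+1) ecoef n k *: Pp k.

Lemma kp_horner n x : (kp n).[x] = Krav N p n x.
Proof.
rewrite horner_sum /Krav mulr_sumr; apply: eq_bigr => k _.
rewrite hornerZ Pp_horner /ecoef.
move: (p ^+ k)^-1 ((poch (- N%:R) k * k`!%:R)^-1) (poch (- x) k) (poch (- n%:R) k) => u v w z.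
ring.
Qed.

Lemma p_neq0 : p != 0.
Proof. by rewrite gt_eqF. Qed.

Lemma ecoef_nn n : (n <= N)%N -> ecoef n n = (-1) ^+ n.
Proof.
move=> hn; rewrite /ecoef poch_negnn.
have h1 := poch_negN_neq0 hn.
have h2 : (n`!%:R : R) != 0 by rewrite pnatr_eq0 -lt0n fact_gt0.
have h3 : p ^+ n != 0 by rewrite expf_neq0 // p_neq0.
move: h1 h2 h3; move: (poch (- N%:R) n) (n`!%:R : R) (p ^+ n) ((-1) ^+ n : R) => a b c d h1 h2 h3.
by field; rewrite h1 h2 h3.
Qed.

Lemma size_low n (c : nat -> R) : (size (\sum_(k < n) c k *: Pp k)%R <= n)%N.
Proof.
apply: (big_ind (fun q : {poly R} => size q <= n)%N) => //.
- by rewrite size_poly0.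
- by move=> a b ha hb; apply: leq_trans (size_polyD _ _) _; rewrite geq_max ha hb.
move=> i _; apply: leq_trans (size_scale_leq _ _) _.
by rewrite (proj1 (Pp_size_lead i)).
Qed.

Lemma kp_size_lead n : (n <= N)%N -> size (kp n) = n.+1 /\ lead_coef (kp n) = 1.
Proof.
move=> hn; rewrite /kp big_ord_recr /= ecoef_nn //.
have [hs hl] := Pp_size_lead n.
have hsz : size ((-1) ^+ n *: Pp n) = n.+1 by rewrite size_scale ?signr_eq0 // hs.
have hlow := size_low n (fun k => ecoef n k).
rewrite addrC size_polyDl ?lead_coefDl ?hsz //.
by rewrite lead_coefZ hl -exprMn mulrNN mulr1 expr1n.
Qed.


Definition Lf (f : R -> R) (x : R) : R :=
  p * (N%:R - x) * (f (x + 1) - f x) - x * (1 - p) * (f x - f (x - 1)).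

Lemma D1 (x : R) k :
  poch (- (x + 1)) k.+1 - poch (- x) k.+1 = - k.+1%:R * poch (- x) k.
Proof.
rewrite pochSl pochS.
have -> : - (x + 1) + 1 = - x by ring.
rewrite -nat1r; ring.
Qed.

Lemma D2 (x : R) k :
  x * (poch (- x) k.+1 - poch (- (x - 1)) k.+1) = k.+1%:R * poch (- x) k.+1.
Proof.
rewrite [in LHS]pochSl pochS [in RHS]pochSl.
have -> : - (x - 1) = - x + 1 by ring.
rewrite -nat1r; ring.
Qed.

Lemma D3 (x : R) k :
  (N%:R - x) * poch (- x) k = poch (- x) k.+1 + (N%:R - k%:R) * poch (- x) k.
Proof. rewrite pochS; ring. Qed.

Lemma Lf_poch0 x : Lf (fun t => poch (- t) 0) x = 0.
Proof. by rewrite /Lf !poch0 !subrr !mulr0 subrr. Qed.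

Lemma Lf_pochS x k : Lf (fun t => poch (- t) k.+1) x =
  - k.+1%:R * poch (- x) k.+1 - p * k.+1%:R * (N%:R - k%:R) * poch (- x) k.
Proof.
rewrite /Lf D1.
have e2 : x * (1 - p) * (poch (- x) k.+1 - poch (- (x - 1)) k.+1) =
  (1 - p) * (x * (poch (- x) k.+1 - poch (- (x - 1)) k.+1)) by ring.
rewrite e2 D2.
have e3 : p * (N%:R - x) * (- k.+1%:R * poch (- x) k) =
   - p * k.+1%:R * ((N%:R - x) * poch (- x) k) by ring.
rewrite e3 D3; ring.
Qed.

Lemma Lf_ext (f g : R -> R) x : (forall t, f t = g t) -> Lf f x = Lf g x.
Proof. by move=> h; rewrite /Lf !h. Qed.

Lemma Lf_lin (I : finType) (c : I -> R) (f : I -> R -> R) x :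
  Lf (fun t => \sum_i c i * f i t) x = \sum_i c i * Lf (f i) x.
Proof.
rewrite /Lf.
have e : forall t u, \sum_i c i * f i t - \sum_i c i * f i u = \sum_i c i * (f i t - f i u).
  by move=> t u; rewrite -sumrB; apply: eq_bigr => i _; ring.
rewrite !e !mulr_sumr -sumrB; apply: eq_bigr => i _; ring.
Qed.

Lemma ecoef_step n k : (k <= n)%N -> (n <= N)%N ->
  (n%:R - k%:R) * ecoef n k = p * k.+1%:R * (N%:R - k%:R) * ecoef n k.+1.
Proof.
move=> hk hn.
case: (ltnP k N) => hkN; last first.
  have ek : k = n by lia.
  have eN : k = N by lia.
  have -> : n%:R - k%:R = 0 :> R by rewrite ek subrr.
  have -> : N%:R - k%:R = 0 :> R by rewrite eN subrr.
  by rewrite !mulr0 !mul0r.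
rewrite /ecoef !pochS factS natrM exprS.
have h1 : poch (- N%:R : R) k != 0 by exact: (poch_negN_neq0 (ltnW hkN)).
have h2 : (k`!%:R : R) != 0 by rewrite pnatr_eq0 -lt0n fact_gt0.
have h3 : p ^+ k != 0 by rewrite expf_neq0 // p_neq0.
have h4 : (- N%:R + k%:R : R) != 0.
  by rewrite addrC subr_eq0 eqr_nat; apply/eqP; lia.
have h5 : (k.+1%:R : R) != 0 by rewrite pnatr_eq0.
have h6 := p_neq0.
move: h1 h2 h3 h4 h5 h6.
move: (poch (- N%:R) k) (k`!%:R : R) (p ^+ k) (poch (- n%:R) k) (p ^+ n * poch (- N%:R) n) => a b c d e h1 h2 h3 h4 h5 h6.
field.
by rewrite h1 h2 h3 h4 h6 nat1r h5.
Qed.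

Lemma kp_hornerE n x : (kp n).[x] = \sum_(k < n.+1) ecoef n k * poch (- x) k.
Proof. by rewrite horner_sum; apply: eq_bigr => k _; rewrite hornerZ Pp_horner. Qed.

Lemma kp_diffeq n x : (n <= N)%N ->
  Lf (fun t => (kp n).[t]) x = - n%:R * (kp n).[x].
Proof.
move=> hn.
rewrite (Lf_ext (g := fun t => \sum_(k < n.+1) ecoef n k * poch (- t) k)); last first.
  by move=> t; rewrite kp_hornerE.
rewrite Lf_lin kp_hornerE.
pose u (k : nat) : R := if k is k'.+1 then p * k%:R * (N%:R - k'%:R) * ecoef n k * poch (- x) k' else 0.
have hterm : forall k : 'I_n.+1, ecoef n k * Lf (fun t => poch (- t) k) x =
    - n%:R * (ecoef n k * poch (- x) k) + (u k.+1 - u k).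
  move=> [[|k] hk] /=.
    rewrite Lf_poch0 poch0 /u -(ecoef_step (leq0n n) hn); ring.
  rewrite Lf_pochS /u -(@ecoef_step n k.+1 hk hn); ring.
rewrite (eq_bigr _ (fun k _ => hterm k)) big_split /= -mulr_sumr.
rewrite -(big_mkord xpredT (fun k => u k.+1 - u k)) telescope_sumr //.
rewrite /u -(ecoef_step (leqnn n) hn) subrr !mul0r subr0.
by rewrite /= addr0.
Qed.


Lemma w_step x : (x < N)%N ->
  wbin N p x * p * (N%:R - x%:R) = wbin N p x.+1 * x.+1%:R * (1 - p).
Proof.
move=> hx; rewrite /wbin.
have h : (x.+1%:R * 'C(N, x.+1)%:R : R) = (N%:R - x%:R) * 'C(N, x)%:R.
  by rewrite -natrM mul_bin_left natrM natrB // ltnW.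
rewrite -(subnSK hx) exprS exprS.
have E : 'C(N, x.+1)%:R * (p * p ^+ x) * (1 - p) ^+ (N - x.+1) * x.+1%:R * (1 - p) =
   (x.+1%:R * 'C(N, x.+1)%:R) * p ^+ x * p * (1 - p) ^+ (N - x.+1) * (1 - p) by ring.
rewrite E h; ring.
Qed.

Definition symf (f g : R -> R) : R :=
  \sum_(x < N) wbin N p x.+1 * x.+1%:R *
     ((f x.+1%:R - f x%:R) * (g x.+1%:R - g x%:R)).

Lemma Lf_sum (f g : R -> R) :
  \sum_(x < N.+1) wbin N p x * (Lf f x%:R * g x%:R) = - (1 - p) * symf f g.
Proof.
have e1 : forall x : 'I_N.+1, wbin N p x * (Lf f x%:R * g x%:R) =
   wbin N p x * (p * (N%:R - x%:R) * (f (x%:R + 1) - f x%:R) * g x%:R)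
 - wbin N p x * (x%:R * (1 - p) * (f x%:R - f (x%:R - 1)) * g x%:R).
  by move=> x; rewrite /Lf; ring.
rewrite (eq_bigr _ (fun x _ => e1 x)) sumrB.
rewrite big_ord_recr /= subrr !(mulr0, mul0r) addr0.
rewrite big_ord_recl /= !mul0r mulr0 add0r.
rewrite /symf -sumrB mulr_sumr; apply: eq_bigr => i _.
rewrite /bump /= add1n natr1.
have -> : i.+1%:R - 1 = i%:R :> R by rewrite -natr1 addrK.
have hw := w_step (ltn_ord i).
have E : wbin N p i * (p * (N%:R - i%:R) * (f i.+1%:R - f i%:R) * g i%:R) =
   (wbin N p i * p * (N%:R - i%:R)) * (f i.+1%:R - f i%:R) * g i%:R by ring.
rewrite E hw; ring.
Qed.

Lemma Lf_symm (f g : R -> R) :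
  \sum_(x < N.+1) wbin N p x * (Lf f x%:R * g x%:R) =
  \sum_(x < N.+1) wbin N p x * (f x%:R * Lf g x%:R).
Proof.
rewrite Lf_sum.
have -> : \sum_(x < N.+1) wbin N p x * (f x%:R * Lf g x%:R) =
          \sum_(x < N.+1) wbin N p x * (Lf g x%:R * f x%:R).
  by apply: eq_bigr => x _; rewrite mulrC [f _ * _]mulrC mulrC.
rewrite Lf_sum; congr (_ * _); apply: eq_bigr => x _; ring.
Qed.

Definition ip (f g : {poly R}) : R :=
  \sum_(x < N.+1) wbin N p x * (f.[x%:R] * g.[x%:R]).

Lemma ortho m n : (m <= N)%N -> (n <= N)%N -> m != n -> ip (kp m) (kp n) = 0.
Proof.
move=> hm hn hmn.
have h := Lf_symm (fun t => (kp m).[t]) (fun t => (kp n).[t]).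
have e1 : \sum_(x < N.+1) wbin N p x * (Lf (fun t => (kp m).[t]) x%:R * (kp n).[x%:R])
   = - m%:R * ip (kp m) (kp n).
  rewrite /ip mulr_sumr; apply: eq_bigr => x _; rewrite kp_diffeq //; ring.
have e2 : \sum_(x < N.+1) wbin N p x * ((kp m).[x%:R] * Lf (fun t => (kp n).[t]) x%:R)
   = - n%:R * ip (kp m) (kp n).
  rewrite /ip mulr_sumr; apply: eq_bigr => x _; rewrite kp_diffeq //; ring.
rewrite e1 e2 in h.
move: h; move: (ip (kp m) (kp n)) => I h.
have : (n%:R - m%:R) * I = (- m%:R * I) - (- n%:R * I) by ring.
rewrite h subrr; move/eqP; rewrite mulf_eq0 subr_eq0 eqr_nat eq_sym (negbTE hmn) /=.
by move/eqP.
Qed.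


Lemma ipC f g : ip f g = ip g f.
Proof. by apply: eq_bigr => x _; rewrite mulrC [f.[_] * _]mulrC mulrC. Qed.

Lemma ipD f g h : ip f (g + h) = ip f g + ip f h.
Proof. by rewrite /ip -big_split /=; apply: eq_bigr => x _; rewrite hornerD; ring. Qed.

Lemma ipZ f c g : ip f (c *: g) = c * ip f g.
Proof. by rewrite /ip mulr_sumr; apply: eq_bigr => x _; rewrite hornerZ; ring. Qed.

Lemma ipN f g : ip f (- g) = - ip f g.
Proof. by rewrite /ip -sumrN; apply: eq_bigr => x _; rewrite hornerN; ring. Qed.

Lemma ipB f g h : ip f (g - h) = ip f g - ip f h.
Proof. by rewrite ipD ipN. Qed.

Lemma ip0 f : ip f 0 = 0.
Proof. by rewrite /ip big1 // => x _; rewrite horner0 !mulr0. Qed.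

Lemma ipX f g : ip ('X * f) g = ip f ('X * g).
Proof. by apply: eq_bigr => x _; rewrite !hornerM !hornerX; ring. Qed.

Lemma w_pos (x : 'I_N.+1) : 0 < wbin N p x.
Proof.
rewrite /wbin !mulr_gt0 // ?exprn_gt0 ?subr_gt0 // ltr0n bin_gt0.
by rewrite -ltnS.
Qed.

Lemma ip_self_eq0 q : ip q q = 0 -> forall x : 'I_N.+1, q.[x%:R] = 0.
Proof.
move=> h x.
have hx : wbin N p x * (q.[x%:R] * q.[x%:R]) = 0.
  apply: (psumr_eq0P _ h) => // i _.
  exact: mulr_ge0 (ltW (w_pos i)) (sqr_ge0 (q.[i%:R])).
move/eqP: hx; rewrite mulf_eq0 (gt_eqF (w_pos x)) /= mulf_eq0 orbb.
by move/eqP.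
Qed.

Lemma poly_zero_pts (q : {poly R}) : (size q <= N.+1)%N -> (forall x : 'I_N.+1, q.[x%:R] = 0) -> q = 0.
Proof.
move=> hs hz; apply/eqP; apply/negPn/negP => hq.
have := max_poly_roots (rs := [seq i%:R | i <- iota 0 N.+1]) hq.
rewrite size_map size_iota map_inj_uniq ?iota_uniq; last first.
  by move=> a b /eqP; rewrite eqr_nat => /eqP.
have -> : all (root q) [seq i%:R | i <- iota 0 N.+1].
  apply/allP => t /mapP [i]; rewrite mem_iota add0n => hi ->.
  by rewrite /root (hz (Ordinal hi)).
by move=> /(_ isT isT); rewrite ltnNge hs.
Qed.

Lemma kp_neq0 k : (k <= N)%N -> kp k != 0.
Proof. by move=> hk; rewrite -size_poly_eq0 (proj1 (kp_size_lead hk)). Qed.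

Lemma kp_coef k : (k <= N)%N -> (kp k)`_k = 1.
Proof.
move=> hk; have [hs hl] := kp_size_lead hk.
by rewrite lead_coefE hs in hl.
Qed.

Lemma h_pos k : (k <= N)%N -> 0 < ip (kp k) (kp k).
Proof.
move=> hk.
have hge : 0 <= ip (kp k) (kp k).
  by apply: sumr_ge0 => i _; apply: mulr_ge0 (ltW (w_pos i)) (sqr_ge0 _).
rewrite lt_def hge andbT; apply/negP => /eqP h0.
have := poly_zero_pts _ (ip_self_eq0 h0).
rewrite (proj1 (kp_size_lead hk)) ltnS => /(_ hk) /eqP.
by rewrite (negbTE (kp_neq0 hk)).
Qed.

Lemma h_neq0 k : (k <= N)%N -> ip (kp k) (kp k) != 0.
Proof. by move=> hk; rewrite gt_eqF // h_pos. Qed.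

Lemma ortho_low q m : (m <= N.+1)%N -> (forall i, (i < m)%N -> ip q (kp i) = 0) ->
  forall s : {poly R}, (size s <= m)%N -> ip q s = 0.
Proof.
elim: m => [|m IH] hm ho s hs.
  by move/size_poly_leq0P: hs => ->; rewrite ip0.
have hmN : (m <= N)%N by rewrite -ltnS.
have -> : s = (s - s`_m *: kp m) + s`_m *: kp m by rewrite subrK.
rewrite ipD ipZ ho // mulr0 addr0; apply: IH.
- exact: ltnW.
- by move=> i hi; apply: ho; apply: ltn_trans hi _.
apply/leq_sizeP => j hj; rewrite coefB coefZ.
case: (ltngtP m j) => hmj; last first.
- by rewrite -hmj kp_coef // mulr1 subrr.
- by move: hj; rewrite leqNgt hmj.
have h1 : s`_j = 0 by apply/(leq_sizeP _ _ hs).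
have h2 : (kp m)`_j = 0.
  have hsz : (size (kp m) <= m.+1)%N by rewrite (proj1 (kp_size_lead hmN)).
  by apply/(leq_sizeP _ _ hsz).
by rewrite h1 h2 mulr0 subrr.
Qed.


Lemma size_addB_le (a b : {poly R}) m : (size a <= m)%N -> (size b <= m)%N ->
  (size (a - b)%R <= m)%N.
Proof.
move=> ha hb; apply: leq_trans (size_polyD _ _) _.
by rewrite size_polyN geq_max ha hb.
Qed.

Lemma size_Z_le (c : R) (a : {poly R}) m : (size a <= m)%N -> (size (c *: a)%R <= m)%N.
Proof. by move=> h; apply: leq_trans (size_scale_leq _ _) h. Qed.

Lemma size_kp_le k m : (k <= N)%N -> (k < m)%N -> (size (kp k) <= m)%N.
Proof. by move=> hk hm; rewrite (proj1 (kp_size_lead hk)). Qed.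

Lemma size_Xkp k : (k <= N)%N -> size ('X * kp k)%R = k.+2.
Proof. by move=> hk; rewrite mulrC size_mulX ?kp_neq0 // (proj1 (kp_size_lead hk)). Qed.

Lemma sizeXK j : (j.+1 <= N)%N -> (size ('X * kp j - kp j.+1)%R <= j.+1)%N.
Proof.
move=> hj; have hj' : (j <= N)%N by exact: ltnW.
apply/leq_sizeP => i hi; rewrite coefB coefXM.
have -> : (i == 0%N) = false by case: i hi.
case: (ltngtP i j.+1) => hij.
- by move: hi; rewrite leqNgt hij.
- have h1 : (kp j)`_i.-1 = 0.
    have hsz : (size (kp j) <= i.-1)%N by rewrite (proj1 (kp_size_lead hj')); case: i hi hij.
    by apply/(leq_sizeP _ _ hsz).
  have h2 : (kp j.+1)`_i = 0.
    have hsz : (size (kp j.+1) <= i)%N by rewrite (proj1 (kp_size_lead hj)).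
    by apply/(leq_sizeP _ _ hsz).
  by rewrite h1 h2 subrr.
by rewrite hij /= !kp_coef // subrr.
Qed.

Definition hh k := ip (kp k) (kp k).
Definition beta k := ip ('X * kp k) (kp k) / hh k.
Definition gam k := if k is k'.+1 then hh k / hh k' else 0.
Definition rpoly k := 'X * kp k - kp k.+1 - beta k *: kp k - gam k *: kp k.-1.

Lemma ortho_kp_low k (s : {poly R}) : (k <= N)%N -> (size s <= k)%N -> ip (kp k) s = 0.
Proof.
move=> hk hs; apply: (ortho_low (m := k)) => //; first exact: leqW.
by move=> i hi; apply: ortho => //; [exact: leq_trans (ltnW hi) hk | rewrite neq_ltn hi orbT].
Qed.

Lemma ortho' i k : (i <= N)%N -> (k <= N)%N -> i != k -> ip (kp i) (kp k) = 0.
Proof. exact: ortho. Qed.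

Lemma rpoly_ortho k i : (k.+1 <= N)%N -> (i <= k)%N -> ip (kp i) (rpoly k) = 0.
Proof.
move=> hk hi.
have hkN : (k <= N)%N by exact: ltnW.
have hiN : (i <= N)%N by exact: leq_trans hi hkN.
rewrite /rpoly !ipB !ipZ.
have hA : ip (kp i) ('X * kp k) = ip (kp k) ('X * kp i) by rewrite ipC ipX.
have -> : ip (kp i) (kp k.+1) = 0.
  by apply: ortho' => //; rewrite neq_ltn ltnS hi.
rewrite subr0 hA.
case: (ltngtP i k) => hik; last first.
-
  rewrite hik /beta -/(hh k) divfK ?h_neq0 // ipX subrr sub0r.
  case: k hk hkN hi hiN hik hA => [|k] hk hkN hi hiN hik hA /=; first by rewrite mul0r oppr0.
  rewrite ortho' ?mulr0 ?oppr0 //; first exact: ltnW.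
  by rewrite neq_ltn ltnSn orbT.
- by move: hi; rewrite leqNgt hik.
have -> : ip (kp i) (kp k) = 0 by apply: ortho' => //; rewrite neq_ltn hik.
rewrite mulr0 subr0.
case: k hk hkN hi hik hA => [|k] hk hkN hi hik hA //=.
case: (ltngtP i k) => hik'.
-
  rewrite (ortho_kp_low (k := k.+1)) //; last by rewrite size_Xkp.
  by rewrite ortho' ?mulr0 ?subrr //; [exact: ltnW | rewrite neq_ltn hik'].
- by move: hik; rewrite ltnS leqNgt hik'.
rewrite hik'.
have -> : 'X * kp k = kp k.+1 + ('X * kp k - kp k.+1) by rewrite addrC subrK.
rewrite ipD (ortho_kp_low (k := k.+1) (s := 'X * kp k - kp k.+1)) ?sizeXK ?addr0 //.
rewrite /hh divfK ?subrr // h_neq0 //.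
exact: ltnW.
Qed.

Lemma rpoly0 k : (k.+1 <= N)%N -> rpoly k = 0.
Proof.
move=> hk; have hkN : (k <= N)%N by exact: ltnW.
have hs : (size (rpoly k) <= k.+1)%N.
  rewrite /rpoly; apply: size_addB_le; [apply: size_addB_le|apply: size_Z_le].
  - exact: sizeXK.
  - by apply: size_Z_le; apply: size_kp_le.
  - apply: size_kp_le; last by case: k hk hkN.
    by case: k hk hkN => // k _ h; exact: ltnW.
apply: poly_zero_pts; first by apply: leq_trans hs _.
apply: ip_self_eq0; apply: (ortho_low (m := k.+1)) => // i hi.
by rewrite ipC; apply: rpoly_ortho.
Qed.

Lemma recur k t : (k.+1 <= N)%N ->
  t * (kp k).[t] = (kp k.+1).[t] + beta k * (kp k).[t] + gam k * (kp k.-1).[t].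
Proof.
move=> hk; have := congr1 (fun q => q.[t]) (rpoly0 hk).
rewrite /rpoly !hornerE /= => /eqP; rewrite !subr_eq0 => /eqP h.
by rewrite mulrC -h; ring.
Qed.


Lemma Knorm2_hh k : Knorm2 N p k = hh k.
Proof.
rewrite /Knorm2 /hh /ip; apply: eq_bigr => x _; rewrite kp_horner; ring.
Qed.

Lemma kp0_horner t : (kp 0).[t] = 1.
Proof. by rewrite kp_hornerE big_ord1 poch0 mulr1 ecoef_nn. Qed.

Lemma CD n x y : (n.+1 <= N)%N ->
  (x - y) * \sum_(k < n.+1) (kp k).[x] * (kp k).[y] / hh k =
  ((kp n.+1).[x] * (kp n).[y] - (kp n).[x] * (kp n.+1).[y]) / hh n.
Proof.
elim: n => [|n IH] hn.
  rewrite big_ord1 !kp0_horner.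
  have rx := recur x hn; have ry := recur y hn.
  rewrite /= !kp0_horner /gam !mul0r !addr0 !mulr1 in rx ry.
  have -> : (kp 1).[x] = x - beta 0 by rewrite [X in X - _]rx addrK.
  have -> : (kp 1).[y] = y - beta 0 by rewrite [X in X - _]ry addrK.
  ring.
have hn' : (n.+1 <= N)%N by exact: ltnW.
rewrite big_ord_recr /= mulrDr IH //.
have rx := recur x hn; have ry := recur y hn.
rewrite /= /gam in rx ry.
have ex : (kp n.+2).[x] = x * (kp n.+1).[x] - beta n.+1 * (kp n.+1).[x]
    - hh n.+1 / hh n * (kp n).[x] by rewrite rx; ring.
have ey : (kp n.+2).[y] = y * (kp n.+1).[y] - beta n.+1 * (kp n.+1).[y]
    - hh n.+1 / hh n * (kp n).[y] by rewrite ry; ring.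
rewrite ex ey.
have h1 := h_neq0 (ltnW hn'); have h2 := h_neq0 hn'.
move: h1 h2; rewrite -/(hh n) -/(hh n.+1).
move: (hh n) (hh n.+1) (beta n.+1) ((kp n).[x]) ((kp n).[y]) ((kp n.+1).[x]) ((kp n.+1).[y])
  => a b c d e f g h1 h2.
by field; rewrite h1 h2.
Qed.

End Prf.
Section Diff.
Variable R : realFieldType.

Lemma DeltaNS (f : R -> R) k y : DeltaN k.+1 f y = DeltaN k f (y + 1) - DeltaN k f y.
Proof. by []. Qed.

Lemma DeltaN0 (f : R -> R) y : DeltaN 0 f y = f y.
Proof. by []. Qed.

Lemma DeltaN_ext (f g : R -> R) j : forall y,
  (forall i, (i <= j)%N -> f (y + i%:R) = g (y + i%:R)) -> DeltaN j f y = DeltaN j g y.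
Proof.
elim: j => [|j IH] y h.
  by rewrite !DeltaN0 -(addr0 y) (h 0%N).
rewrite !DeltaNS (IH y) ?(IH (y + 1)) //.
- move=> i hi; rewrite -addrA nat1r; exact: h.
- move=> i hi; exact: h (leqW hi).
Qed.

Lemma DeltaN_lin (I : finType) (c : I -> R) (f : I -> R -> R) j : forall y,
  DeltaN j (fun t => \sum_i c i * f i t) y = \sum_i c i * DeltaN j (f i) y.
Proof.
elim: j => [|j IH] y; first by [].
rewrite DeltaNS !IH -sumrB; apply: eq_bigr => i _; rewrite DeltaNS; ring.
Qed.

Lemma DeltaN_lin2 (a b : R) (f g : R -> R) j : forall y,
  DeltaN j (fun t => a * f t + b * g t) y = a * DeltaN j f y + b * DeltaN j g y.
Proof.
elim: j => [|j IH] y; first by [].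
rewrite DeltaNS !IH !DeltaNS; ring.
Qed.

Lemma fallingS (z : R) k : falling z k.+1 = falling z k * (z - k%:R).
Proof. by rewrite /falling big_ord_recr. Qed.

Lemma falling0 (z : R) : falling z 0 = 1.
Proof. by rewrite /falling big_ord0. Qed.

Lemma fallingSl (z : R) k : falling z k.+1 = z * falling (z - 1) k.
Proof.
rewrite /falling big_ord_recl /= subr0; congr (_ * _); apply: eq_bigr => i _.
by rewrite /bump /= -nat1r opprD addrA.
Qed.

Lemma falling_neq0 (z : R) k : (forall m, (m < k)%N -> z != m%:R) -> falling z k != 0.
Proof.
move=> h; rewrite /falling; apply/prodf_neq0 => i _.
by rewrite subr_eq0; apply: h.
Qed.

Lemma fact_neq0 k : (k`!%:R : R) != 0.
Proof. by rewrite pnatr_eq0 -lt0n fact_gt0. Qed.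

Lemma Dformula (g : R -> R) x j : forall y, (forall m, (m <= j)%N -> x - y != m%:R) ->
  DeltaN j (fun t => g t / (x - t)) y =
  j`!%:R / falling (x - y) j.+1 *
    \sum_(k < j.+1) (DeltaN k g y / k`!%:R * falling (x - y) k).
Proof.
elim: j => [|j IH] y h.
  rewrite DeltaN0 big_ord1 DeltaN0 fallingS !falling0 subr0 fact0 mul1r.
  have hz := h 0%N (leqnn 0).
  by rewrite divr1 mulr1 mulrC mul1r.
rewrite DeltaNS IH; last first.
  move=> m hm; have := h m.+1 hm; apply: contra => /eqP e.
  by rewrite -nat1r; apply/eqP; rewrite -e; ring.
rewrite IH; last by move=> m hm; apply: h; exact: leqW.
set z := x - y.
have e1 : x - (y + 1) = z - 1 by rewrite /z; ring.
rewrite e1.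
have hz : z != 0 by have := h 0%N isT.
have hzj : z - j.+1%:R != 0 by rewrite subr_eq0; apply: h.
have hF : falling z j.+2 != 0.
  by apply: falling_neq0 => m hm; apply: h.
have eA : \sum_(k < j.+1) (DeltaN k g (y + 1) / k`!%:R * falling (z - 1) k) =
    z^-1 * \sum_(k < j.+1) ((DeltaN k.+1 g y + DeltaN k g y) / k`!%:R * falling z k.+1).
  rewrite mulr_sumr; apply: eq_bigr => k _.
  rewrite [falling z _]fallingSl DeltaNS; field => //.
  by rewrite hz fact_neq0.
rewrite eA.
have ea : falling (z - 1) j.+1 = falling z j.+2 / z by rewrite [in RHS]fallingSl; field.
have eb : falling z j.+1 = falling z j.+2 / (z - j.+1%:R).
  by rewrite [in RHS]fallingS mulfK.
rewrite ea eb.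
have P1 : \sum_(k < j.+1) (DeltaN k.+1 g y / k`!%:R * falling z k.+1) =
          \sum_(k < j.+2) (k%:R * (DeltaN k g y / k`!%:R * falling z k)).
  rewrite [RHS]big_ord_recl /= mul0r add0r; apply: eq_bigr => k _.
  rewrite /bump /= add1n factS natrM; field.
  by rewrite fact_neq0 nat1r pnatr_eq0.
have P2 : \sum_(k < j.+1) (DeltaN k g y / k`!%:R * falling z k.+1) -
          (z - j.+1%:R) * \sum_(k < j.+1) (DeltaN k g y / k`!%:R * falling z k) =
          \sum_(k < j.+2) ((j.+1%:R - k%:R) * (DeltaN k g y / k`!%:R * falling z k)).
  rewrite [RHS]big_ord_recr /= subrr mul0r addr0 mulr_sumr -sumrB.
  apply: eq_bigr => k _; rewrite fallingS; ring.
have eS : \sum_(k < j.+1) ((DeltaN k.+1 g y + DeltaN k g y) / k`!%:R * falling z k.+1) =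
   \sum_(k < j.+1) (DeltaN k.+1 g y / k`!%:R * falling z k.+1) + \sum_(k < j.+1) (DeltaN k g y / k`!%:R * falling z k.+1).
  by rewrite -big_split /=; apply: eq_bigr => k _; ring.
have eT : (\sum_(k < j.+2) (DeltaN k g y / k`!%:R * falling z k)) * (j.+1%:R) =
  \sum_(k < j.+2) (k%:R * (DeltaN k g y / k`!%:R * falling z k)) +
  \sum_(k < j.+2) ((j.+1%:R - k%:R) * (DeltaN k g y / k`!%:R * falling z k)).
  by rewrite mulr_suml -big_split /=; apply: eq_bigr => k _; ring.
move: eS eT P1 P2.
move: (\sum_(k < j.+1) ((DeltaN k.+1 g y + DeltaN k g y) / k`!%:R * falling z k.+1))
      (\sum_(k < j.+1) (DeltaN k.+1 g y / k`!%:R * falling z k.+1))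
      (\sum_(k < j.+1) (DeltaN k g y / k`!%:R * falling z k.+1))
      (\sum_(k < j.+2) (DeltaN k g y / k`!%:R * falling z k))
      (\sum_(k < j.+2) (k%:R * (DeltaN k g y / k`!%:R * falling z k)))
      (\sum_(k < j.+2) ((j.+1%:R - k%:R) * (DeltaN k g y / k`!%:R * falling z k)))
      (\sum_(k < j.+1) (DeltaN k g y / k`!%:R * falling z k)) => A A1 A2 T U V B eS eT P1 P2.
rewrite factS natrM.
have eA2 : A2 = V + (z - j.+1%:R) * B by rewrite -P2; ring.
have eU : U = T * j.+1%:R - V by rewrite eT; ring.
rewrite eS P1 eA2 eU.
have hfj := fact_neq0 j.
rewrite -nat1r in hzj. by field; rewrite hF hzj hz.
Qed.
End Diff.

Theorem proposition2p2 (R : realFieldType) (N : nat) (p : R)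
  (hp0 : 0 < p) (hp1 : p < 1)
  (n : nat) (hn1 : (1 <= n)%N) (hnN : (n <= N)%N)
  (j : nat) (x y : R)
  (hxy : forall m : nat, (m <= j)%N -> x - y != m%:R) :
  Kker N p n 0 j x y =
    Acoef N p n j x y * Krav N p n x + Bcoef N p n j x y * Krav N p n.-1 x.
Proof.
case: n hn1 hnN => [//|n] _ hnN.
rewrite /Acoef /Bcoef /=.
have hnN' : (n <= N)%N := ltnW hnN.
have hh0 : Knorm2 N p n != 0 by rewrite Knorm2_hh h_neq0.
set h := Knorm2 N p n.
set a := Krav N p n.+1 x / h.
set b := - Krav N p n x / h.
have step1 : Kker N p n.+1 0 j x y =
    DeltaN j (fun t => \sum_(k < n.+1) (Krav N p k x / Knorm2 N p k) * Krav N p k t) y.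
  by rewrite DeltaN_lin /Kker; apply: eq_bigr => k _; rewrite /= mulrAC.
have step2 : DeltaN j (fun t => \sum_(k < n.+1) (Krav N p k x / Knorm2 N p k) * Krav N p k t) y
    = DeltaN j (fun t => (a * Krav N p n t + b * Krav N p n.+1 t) / (x - t)) y.
  apply: DeltaN_ext => i hi.
  have hxt : x - (y + i%:R) != 0.
    by rewrite opprD addrA subr_eq0; exact: hxy i hi.
  apply: (mulfI hxt).
  have := CD hp0 hp1 x (y + i%:R) hnN.
  move=> hcd.
  have -> : \sum_(k < n.+1) Krav N p k x / Knorm2 N p k * Krav N p k (y + i%:R) =
            \sum_(k < n.+1) (kp N p k).[x] * (kp N p k).[y + i%:R] / hh N p k.
    by apply: eq_bigr => k _; rewrite !kp_horner Knorm2_hh mulrAC.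
  rewrite hcd !kp_horner -Knorm2_hh -/h /a /b; field.
  by rewrite hxt hh0.
rewrite step1 step2 Dformula //.
have e3 : forall k, DeltaN k (fun t => a * Krav N p n t + b * Krav N p n.+1 t) y =
   a * DeltaN k (Krav N p n) y + b * DeltaN k (Krav N p n.+1) y.
  by move=> k; rewrite DeltaN_lin2.
have esum : \sum_(k < j.+1) (DeltaN k (fun t => a * Krav N p n t + b * Krav N p n.+1 t) y
                / k`!%:R * falling (x - y) k) =
   a * \sum_(k < j.+1) (DeltaN k (Krav N p n) y / k`!%:R * falling (x - y) k) +
   b * \sum_(k < j.+1) (DeltaN k (Krav N p n.+1) y / k`!%:R * falling (x - y) k).
  rewrite !mulr_sumr -big_split /=; apply: eq_bigr => k _; rewrite e3; ring.
rewrite esum.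
have hF : falling (x - y) j.+1 != 0 by apply: falling_neq0 => m hm; apply: hxy.
rewrite /a /b.
move: (\sum_(k < j.+1) (DeltaN k (Krav N p n) y / k`!%:R * falling (x - y) k))
      (\sum_(k < j.+1) (DeltaN k (Krav N p n.+1) y / k`!%:R * falling (x - y) k)) => S1 S2.
field.
by rewrite hF hh0.
Qed.
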